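(* Let $n\geq 3$, $p,q>0$ with $pq>1$, $\alpha\in(0,n)$ and $\sigma_1,\sigma_2\in[0,\alpha)$, and consider the system $$u(x)=\int_{\mathbb{R}^n}\frac{v(y)^q}{|x-y|^{n-\alpha}|y|^{\sigma_1}}\,dy,\qquad v(x)=\int_{\mathbb{R}^n}\frac{u(y)^p}{|x-y|^{n-\alpha}|y|^{\sigma_2}}\,dy,\qquad x\in\mathbb{R}^n.$$ (i) If $u,v$ are bounded and decaying positive solutions of this system, then there exists a constant $C>0$ such that, as $|x|\to\infty$, $u(x)\leq C|x|^{-q_0}$ and $v(x)\leq C|x|^{-p_0}$. (ii) Suppose $q\geq p$ and $\sigma_1\geq\sigma_2$, and let $u,v$ be positive solutions of the system. Then there exists a constant $c>0$ such that, as $|x|\to\infty$, $$u(x)\geq \frac{c}{|x|^{n-\alpha}}\quad\text{and}\quad v(x)\geq \frac{c}{|x|^{\min\{n-\alpha,\ p(n-\alpha)-(\alpha-\sigma_2)\}}}.$$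
   Context: A positive solution is a pair of positive functions $u,v$ on $\mathbb{R}^n$ satisfying both equations. Define $$p_0=\frac{\alpha(1+p)-(\sigma_2+\sigma_1p)}{pq-1},\qquad q_0=\frac{\alpha(1+q)-(\sigma_1+\sigma_2q)}{pq-1}.$$ The notation $f(x)\simeq g(x)$ means that there exist constants $c,C>0$ with $cg(x)\leq f(x)\leq Cg(x)$ as $|x|\to\infty$. A positive solution $u,v$ is called decaying if $u(x)\simeq|x|^{-\theta_1}$ and $v(x)\simeq|x|^{-\theta_2}$ for some $\theta_1,\theta_2>0$. *)

(* Defs.v *)
From HB Require Import structures.
From mathcomp Require Import all_boot all_order all_algebra.
From mathcomp Require Import all_classical all_reals all_analysis.
Set Implicit Arguments. Unset Strict Implicit. Unset Printing Implicit Defensive.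
Import Order.TTheory GRing.Theory Num.Theory.
Import numFieldNormedType.Exports.
Local Open Scope classical_set_scope.
Local Open Scope ring_scope.

Definition enorm (R : realType) (n : nat) (x : 'rV[R]_n) : R :=
  Num.sqrt (\sum_(i < n) x ord0 i ^+ 2).

Definition setc (R : realType) (n : nat) (x : 'rV[R]_n) (k : nat) (t : R)
  : 'rV[R]_n := \row_(j < n) (if (j : nat) == k then t else x ord0 j).

Fixpoint iint (R : realType) (n : nat) (k : nat) (f : 'rV[R]_n -> \bar R)
  (x : 'rV[R]_n) : \bar R :=
  match k with
  | O => f x
  | S k' => (\int[@lebesgue_measure R]_(t in setT) iint k' f (setc x k' t))%E
  end.

(* Lebesgue integral over R^n of a nonnegative (Borel measurable) function,
   computed as the iterated integral (Tonelli). *)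
Definition lebint (R : realType) (n : nat) (f : 'rV[R]_n -> \bar R) : \bar R :=
  iint n f 0.

Definition borel_fun (R : realType) (n : nat) (f : 'rV[R]_n -> R) : Prop :=
  forall B : set R, measurable B ->
    <<s [set U : set 'rV[R]_n | open U] >> (f @^-1` B).

Definition kern (R : realType) (n : nat) (alpha sigma r : R)
  (w : 'rV[R]_n -> R) (x y : 'rV[R]_n) : R :=
  powR (w y) r / (powR (enorm (x - y)) (n%:R - alpha) * powR (enorm y) sigma).

Definition pos_solution (R : realType) (n : nat) (p q alpha s1 s2 : R)
  (u v : 'rV[R]_n -> R) : Prop :=
  (forall x, 0 < u x) /\ (forall x, 0 < v x) /\ borel_fun u /\ borel_fun v /\
  (forall x, (u x)%:E = lebint (fun y => (kern alpha s1 q v x y)%:E)) /\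
  (forall x, (v x)%:E = lebint (fun y => (kern alpha s2 p u x y)%:E)).

Definition asymp_eq (R : realType) (n : nat) (f g : 'rV[R]_n -> R) : Prop :=
  exists c C r0 : R, 0 < c /\ 0 < C /\
    forall x, r0 < enorm x -> c * g x <= f x /\ f x <= C * g x.

Definition decaying (R : realType) (n : nat) (u v : 'rV[R]_n -> R) : Prop :=
  exists th1 th2 : R, 0 < th1 /\ 0 < th2 /\
    asymp_eq u (fun x => powR (enorm x) (- th1)) /\
    asymp_eq v (fun x => powR (enorm x) (- th2)).

Definition p0 (R : realType) (p q alpha s1 s2 : R) : R :=
  (alpha * (1 + p) - (s2 + s1 * p)) / (p * q - 1).
Definition q0 (R : realType) (p q alpha s1 s2 : R) : R :=
  (alpha * (1 + q) - (s1 + s2 * q)) / (p * q - 1).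

(* Main.v *)
Require Import Defs.
From HB Require Import structures.
From mathcomp Require Import all_boot all_order all_algebra.
From mathcomp Require Import all_classical all_reals all_analysis.
From mathcomp Require Import measurable_realfun.
From mathcomp Require Import ring lra.
Set Implicit Arguments. Unset Strict Implicit. Unset Printing Implicit Defensive.
Import Order.TTheory GRing.Theory Num.Theory.
Import numFieldNormedType.Exports.
Local Open Scope classical_set_scope.
Local Open Scope ring_scope.

Section Mono.
Local Open Scope ereal_scope.
Lemma le_int_gen d (T : measurableType d) (R : realType) (mu : {measure set T -> \bar R})
  (f g : T -> \bar R) : (forall t, 0 <= f t) -> (forall t, f t <= g t) ->
  \int[mu]_(t in setT) f t <= \int[mu]_(t in setT) g t.
Proof.
move=> f0 fg.
rewrite /integral !patch_setT.
have hf : f^\- = cst 0.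
  by apply/funext => t; apply: (ge0_funenegE (D:=setT)) => //; rewrite in_setT.
have hg : g^\- = cst 0.
  by apply/funext => t; apply: (ge0_funenegE (D:=setT)) => [x _|]; [exact: (le_trans (f0 x))|rewrite in_setT].
rewrite hf hg leeB // .
apply: le_ereal_sup => _ [h /= hh <-]; exists h => //= t.
apply: (le_trans (hh t)).
by apply: (funepos_le (D:=setT)) => [x _|]; rewrite ?in_setT.
Qed.
End Mono.

Section Iint.
Context {R : realType} {n : nat}.
Local Open Scope ereal_scope.
Implicit Types (f g : 'rV[R]_n -> \bar R).

Lemma iint_ge0 k f : (forall y, 0 <= f y) -> forall x, 0 <= iint k f x.
Proof.
move=> f0; elim: k => [|k IH] x /=; first exact: f0.
by apply: integral_ge0 => t _; exact: IH.
Qed.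

Lemma le_iint k f g : (forall y, 0 <= f y) -> (forall y, f y <= g y) ->
  forall x, iint k f x <= iint k g x.
Proof.
move=> f0 fg; elim: k => [|k IH] x /=; first exact: fg.
apply: le_int_gen => t; first exact: iint_ge0.
exact: IH.
Qed.

Lemma int_itv (c lo hi : R) : (0 <= c)%R -> (lo <= hi)%R ->
  \int[@lebesgue_measure R]_(t in setT) (c * ((lo <= t <= hi)%R)%:R)%:E = (c * (hi - lo))%:E.
Proof.
move=> c0 lh.
transitivity (\int[@lebesgue_measure R]_(t in setT) (c%:E * (\1_([set` `[lo, hi]]) t)%:E)).
  apply: eq_integral => t _; rewrite indicE /= -EFinM; congr (_ * _%:R)%:E.
  by rewrite mem_setE in_itv.
rewrite ge0_integralZl_EFin //; last first.
  apply/measurable_EFinP; exact: measurable_indic.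
rewrite integral_indic // setIT.
have := lebesgue_measure_itv `[lo, hi]; rewrite /= => ->.
rewrite lte_fin; have [hlt|hge] := ltP lo hi; first by rewrite -EFinD EFinM.
have -> : hi = lo by apply/le_anti; rewrite lh hge.
by rewrite subrr mulr0 mule0.
Qed.


Definition inbox (lo hi : 'I_n -> R) (k : nat) (y : 'rV[R]_n) : bool :=
  [forall i : 'I_n, (k <= i)%N ==> ((lo i <= y ord0 i) && (y ord0 i <= hi i))%R].

Lemma inbox_setc lo hi k (hk : (k < n)%N) x t :
  inbox lo hi k (setc x k t) =
  ((lo (Ordinal hk) <= t) && (t <= hi (Ordinal hk)))%R && inbox lo hi k.+1 x.
Proof.
apply/forallP/andP.
- move=> H; split.
    by have := H (Ordinal hk); rewrite /= leqnn /= /setc mxE /= eqxx.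
  apply/forallP => i; apply/implyP => ki.
  have := H i; rewrite /setc mxE (ltnW ki) /=.
  by rewrite (_ : (i : nat) == k = false) //; apply/negbTE; rewrite neq_ltn ki orbT.
- move=> [tk /forallP H] i; apply/implyP => ki.
  rewrite /setc mxE.
  case: eqP => [ik|ik].
    by move: tk; rewrite (_ : Ordinal hk = i) //; apply: val_inj.
  have := H i; rewrite (_ : (k < i)%N) //.
  by rewrite ltn_neqAle ki andbT; apply/eqP => ik'; apply: ik.
Qed.

Lemma iint_box (M : R) lo hi : (0 <= M)%R -> (forall i, lo i <= hi i)%R ->
  forall k, (k <= n)%N -> forall x,
  iint k (fun y => (M * (inbox lo hi 0 y)%:R)%:E) x =
  (M * (\prod_(i < n | (i < k)%N) (hi i - lo i)) * (inbox lo hi k x)%:R)%:E.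
Proof.
move=> M0 lh; elim => [|k IH] hk x /=.
  by rewrite big_pred0 ?mulr1 // => i.
have hk' : (k < n)%N by [].
transitivity (\int[@lebesgue_measure R]_(t in setT)
  ((M * (\prod_(i < n | (i < k)%N) (hi i - lo i)) * (inbox lo hi k.+1 x)%:R) *
    ((lo (Ordinal hk') <= t <= hi (Ordinal hk'))%R)%:R)%:E).
  apply: eq_integral => t _; rewrite IH ?(ltnW hk) // inbox_setc.
  by case: (inbox lo hi k.+1 x); rewrite ?andbT ?andbF /= ?mulr1 ?mulr0 ?mul0r.
rewrite int_itv //; last first.
  rewrite mulr_ge0 //; first rewrite mulr_ge0 //.
  by apply: prodr_ge0 => i _; rewrite subr_ge0.
rewrite [in RHS](bigD1 (Ordinal hk')) //=.
rewrite [in RHS](eq_bigl (fun i : 'I_n => (i < k)%N)); last first.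
  by move=> i /=; rewrite ltnS ltn_neqAle andbC -val_eqE.
congr (_%:E); ring.
Qed.

Lemma lebint_box (f : 'rV[R]_n -> \bar R) (M : R) lo hi : (0 <= M)%R ->
  (forall i, lo i <= hi i)%R -> (forall y, 0 <= f y) ->
  (forall y, inbox lo hi 0 y -> M%:E <= f y) ->
  (M * \prod_(i < n) (hi i - lo i))%:E <= lebint f.
Proof.
move=> M0 lh f0 fM.
rewrite /lebint.
have -> : (M * \prod_(i < n) (hi i - lo i))%:E =
  iint n (fun y => (M * (inbox lo hi 0 y)%:R)%:E) 0.
  rewrite iint_box // (_ : inbox lo hi n 0 = true); last first.
    by apply/forallP => i; apply/implyP; rewrite leqNgt ltn_ord.
  by rewrite mulr1; congr (_ * _)%:E; apply: eq_bigl => i; rewrite ltn_ord.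
apply: le_iint.
  by move=> y; rewrite lee_fin mulr_ge0.
move=> y; case hy: (inbox lo hi 0 y); last by rewrite mulr0.
by rewrite mulr1; exact: fM.
Qed.

End Iint.

Section Norms.
Context {R : realType} {n : nat}.
Implicit Types z : 'rV[R]_n.

Lemma coord_le_norm z i : `|z ord0 i| <= `|z|.
Proof.
rewrite (_ : `|z| = mx_norm z) // mx_normrE.
by apply: (le_bigmax _ _ (ord0, i)).
Qed.

Lemma norm_le_coord z c : 0 <= c -> (forall i, `|z ord0 i| <= c) -> `|z| <= c.
Proof.
move=> c0 H; rewrite (_ : `|z| = mx_norm z) // mx_normrE.
apply: bigmax_le => // -[a b] _ /=.
by rewrite (ord1 a); exact: H.
Qed.

Lemma enorm_ge0 z : 0 <= enorm z.
Proof. exact: sqrtr_ge0. Qed.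

Lemma norm_le_enorm z : `|z| <= enorm z.
Proof.
apply: norm_le_coord; first exact: enorm_ge0.
move=> i; rewrite /enorm -sqrtr_sqr; apply: ler_wsqrtr.
rewrite (bigD1 i) //= lerDl; apply: sumr_ge0 => j _.
by rewrite sqr_ge0.
Qed.

Lemma enorm_le_norm z : enorm z <= n%:R * `|z|.
Proof.
rewrite /enorm -[X in _ <= X]ger0_norm ?mulr_ge0 // -sqrtr_sqr.
apply: ler_wsqrtr.
apply: (@le_trans _ _ (\sum_(i < n) `|z| ^+ 2)).
  apply: ler_sum => i _; rewrite -real_normK ?num_real //.
  by rewrite lerXn2r ?nnegrE // coord_le_norm.
rewrite sumr_const card_ord exprMn -[X in X <= _]mulr_natl.
apply: ler_wpM2r; first exact: sqr_ge0.
rewrite -natrX ler_nat; case: (n) => // m; rewrite expnS leq_pmulr // expn_gt0.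
Qed.
End Norms.
Section Meas.
Context {R : realType} {n : nat}.

Definition cyl : set (set 'rV[R]_n) :=
  [set A | exists i : 'I_n, exists B : set R, measurable B /\ A = [set y : 'rV[R]_n | B (y ord0 i)]].

Definition TT := g_sigma_algebraType cyl.

Lemma measurable_cyl (i : 'I_n) (B : set R) : measurable B ->
  measurable ([set y | B (y ord0 i)] : set TT).
Proof. by move=> mB; apply: sub_sigma_algebra; exists i, B. Qed.

Lemma mes_setc k : measurable_fun (setT : set (TT * R)) (fun z => (setc z.1 k z.2 : TT)).
Proof.
apply: (@measurability _ _ _ TT _ _ cyl) => //.
move=> _ [_ [i [B [mB ->]]] <-].
case: (eqVneq (i : nat) k) => ik.
  rewrite (_ : _ `&` _ = setT `*` B); first exact: measurableX.
  by apply/seteqP; split => -[y t] /=; rewrite /setc mxE ik eqxx /=; tauto.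
rewrite (_ : _ `&` _ = [set y : TT | B (y ord0 i)] `*` setT).
  by apply: measurableX => //; exact: measurable_cyl.
by apply/seteqP; split => -[y t] /=; rewrite /setc mxE (negbTE ik) /=; tauto.
Qed.

Lemma mes_setc1 k (x : 'rV[R]_n) : measurable_fun (setT : set R) (fun t => (setc x k t : TT)).
Proof.
apply: (@measurability _ _ _ TT _ _ cyl) => //.
move=> _ [_ [i [B [mB ->]]] <-].
case: (eqVneq (i : nat) k) => ik.
  rewrite (_ : _ `&` _ = B) //.
  by apply/seteqP; split => t /=; rewrite /setc mxE ik eqxx /=; tauto.
have [Bx|Bx] := pselect (B (x ord0 i)).
  rewrite (_ : _ `&` _ = setT) //.
  by apply/seteqP; split => t /=; rewrite /setc mxE (negbTE ik) /=; tauto.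
rewrite (_ : _ `&` _ = set0) //.
by apply/seteqP; split => t /=; rewrite /setc mxE (negbTE ik) /=; tauto.
Qed.

Local Open Scope ereal_scope.

Lemma mes_iint k (f : TT -> \bar R) : measurable_fun setT f -> (forall y, 0 <= f y) ->
  measurable_fun (setT : set TT) (iint k f).
Proof.
move=> mf f0; elim: k => [|k IH] //=.
have h0 : forall z : TT * R, 0 <= iint k f (setc z.1 k z.2).
  by move=> z; apply: iint_ge0.
have := @measurable_fun_fubini_tonelli_F _ _ TT _ R (@lebesgue_measure R)
  (fun z => iint k f (setc z.1 k z.2)) (measurableT_comp IH (mes_setc k)) h0.
by [].
Qed.


Lemma iint_scale k (f : TT -> \bar R) : measurable_fun setT f -> (forall y, 0 <= f y) ->
  forall (c : R), (0 <= c)%R -> forall x,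
  iint k (fun y => c%:E * f y) x = c%:E * iint k f x.
Proof.
move=> mf f0 c c0; elim: k => [|k IH] x //=.
transitivity (\int[@lebesgue_measure R]_(t in setT) (c%:E * iint k f (setc x k t))).
  by apply: eq_integral => t _; rewrite IH.
rewrite ge0_integralZl_EFin //.
- by move=> t _; apply: iint_ge0.
- exact: (measurableT_comp (mes_iint k mf f0) (mes_setc1 k x)).
Qed.

Lemma int_pos (h : R -> \bar R) (a b : R) : (a < b)%R -> measurable_fun setT h ->
  (forall t, 0 <= h t) -> (forall t, (a <= t <= b)%R -> 0 < h t) ->
  0 < \int[@lebesgue_measure R]_(t in setT) h t.
Proof.
move=> ab mh h0 hpos.
rewrite lt_neqAle integral_ge0 ?andbT //; apply/eqP => H0.
have mab : measurable ([set` `[a, b]] : set R) by [].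
have H1 : \int[@lebesgue_measure R]_(t in [set` `[a, b]]) `|h t| = 0.
  apply/le_anti; rewrite integral_ge0 ?andbT //.
  rewrite H0 integral_mkcond.
  apply: le_int_gen => t.
    by rewrite /patch; case: ifP.
  rewrite /patch; case: ifP => _ //; by rewrite gee0_abs.
have mh' : measurable_fun [set` `[a, b]] h by apply: measurable_funS mh.
have := (ae_eq_integral_abs (@lebesgue_measure R) mab mh').1 H1.
case=> N [mN N0 sN].
have : (@lebesgue_measure R) [set` `[a, b]] <= (@lebesgue_measure R) N.
  apply: le_measure; rewrite ?inE //.
  move=> t abt; apply: sN => /= H; move: (H abt) => ht.
  have abt' : (a <= t <= b)%R by move: abt; rewrite /= in_itv.
  by move: (hpos t abt'); rewrite ht ltxx.
rewrite N0 lebesgue_measure_itv /= lte_fin ab -EFinD lee_fin subr_le0.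
by rewrite leNgt ab.
Qed.


Lemma iint_pos (f : TT -> \bar R) lo hi : measurable_fun setT f -> (forall y, 0 <= f y) ->
  (forall i, lo i < hi i)%R -> (forall y, inbox lo hi 0 y -> 0 < f y) ->
  forall k, (k <= n)%N -> forall x, inbox lo hi k x -> 0 < iint k f x.
Proof.
move=> mf f0 lh fpos; elim => [|k IH] hk x /=; first exact: fpos.
have hk' : (k < n)%N by [].
move=> xin.
apply: (@int_pos _ (lo (Ordinal hk')) (hi (Ordinal hk'))) => //.
- exact: (measurableT_comp (mes_iint k mf f0) (mes_setc1 k x)).
- by move=> t; apply: iint_ge0.
- move=> t tin; apply: IH; first exact: ltnW.
  by rewrite inbox_setc tin xin.
Qed.


Local Close Scope ereal_scope.

Definition rbox (q : {ffun 'I_n -> rat * rat}) : set 'rV[R]_n :=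
  [set y | forall i, ratr (q i).1 < y ord0 i < ratr (q i).2].

Lemma measurable_rbox q : measurable (rbox q : set TT).
Proof.
rewrite (_ : rbox q = \bigcap_(i in [set: 'I_n]) [set y : 'rV[R]_n | [set` `](ratr (q i).1), (ratr (q i).2)[] (y ord0 i)]).
  apply: fin_bigcap_measurable; first exact: (@finite_finset (ordinal n) setT).
  move=> i _; exact: (measurable_cyl i (measurable_itv _)).
apply/seteqP; split => y /=.
  by move=> H i _ /=; rewrite in_itv /= H.
by move=> H i; have := H i I; rewrite /= in_itv.
Qed.

Lemma open_meas (U : set 'rV[R]_n) : open U -> measurable (U : set TT).
Proof.
move=> oU.
pose A (m : nat) : set TT := [set y | exists q, unpickle m = Some q /\ rbox q `<=` U /\ rbox q y].
have -> : U = \bigcup_m A m.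
  apply/seteqP; split => y; last by move=> [m _ [q [_ [sU /sU]]]].
  move=> Uy.
  have : nbhs y U by move: oU; rewrite openE => /(_ y Uy).
  move=> /nbhs_ballP [e e0 sU].
  have H i : exists q : rat * rat, ratr q.1 < y ord0 i < ratr q.2 /\
      y ord0 i - e / 2 < ratr q.1 /\ ratr q.2 < y ord0 i + e / 2.
    have e20 : 0 < e / 2 by rewrite divr_gt0.
    have [a] : exists a, ratr a \in `](y ord0 i - e / 2), (y ord0 i)[.
      by apply: rat_in_itvoo; rewrite gtrBl.
    have [b] : exists b, ratr b \in `](y ord0 i), (y ord0 i + e / 2)[.
      by apply: rat_in_itvoo; rewrite ltrDl.
    rewrite !in_itv /= => /andP[yb be] /andP[ea ay].
    by exists (a, b) => /=; rewrite ay yb ea be.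
  pose q := [ffun i => proj1_sig (cid (H i))].
  have qP i := proj2_sig (cid (H i)).
  have sq : rbox q `<=` U.
    move=> z zq; apply: sU.
    rewrite -ball_normE /=.
    apply: (@le_lt_trans _ _ (e / 2)); last by rewrite ltr_pdivrMr // ltr_pMr // ltr1n.
    apply: norm_le_coord; first by rewrite divr_ge0 // ltW.
    move=> i; rewrite !mxE.
    have := zq i; rewrite ffunE => /andP[az zb].
    case: (qP i) => _ [ea be].
    rewrite ler_norml; apply/andP; split; lra.
  exists (pickle q) => //; exists q; split; first by rewrite pickleK.
  split => // i; rewrite ffunE; by case: (qP i) => ->.
apply: bigcupT_measurable => m.
case E: (unpickle m) => [q|].
  have [sq|nsq] := pselect (rbox q `<=` U).
    rewrite (_ : A m = rbox q); first exact: measurable_rbox.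
    apply/seteqP; split => y.
      by move=> [q' [] ]; rewrite E => -[<-] [].
    by move=> qy; exists q.
  rewrite (_ : A m = set0) //.
  by apply/seteqP; split => y // [q' [] ]; rewrite E => -[<-] [].
rewrite (_ : A m = set0) //.
by apply/seteqP; split => y // [q' [] ]; rewrite E.
Qed.

Lemma borel_meas (w : 'rV[R]_n -> R) : borel_fun w -> measurable_fun (setT : set TT) w.
Proof.
move=> bw _ B mB; rewrite setTI.
have : <<s [set U : set 'rV[R]_n | open U] >> (w @^-1` B) by exact: bw.
apply: smallest_sub => //.
  exact: (@sigma_algebra_measurable _ TT).
by move=> U oU; exact: open_meas.
Qed.

End Meas.

Section Main.
Context {R : realType}.

Lemma powRE' (s e : R) : 0 < s -> powR s e = expR (e * ln s).
Proof. by move=> s0; rewrite /powR gt_eqF. Qed.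

Lemma kern_ge0 n al sg r (w : 'rV[R]_n -> R) x y : 0 <= kern al sg r w x y.
Proof. by rewrite /kern divr_ge0 // ?mulr_ge0 // powR_ge0. Qed.

Lemma near_geom n (x y : 'rV[R]_n) (i0 : 'I_n) (h : R) : 0 < h ->
  inbox (fun i => x ord0 i + h) (fun i => x ord0 i + 2 * h) 0 y ->
  h <= `|x - y| /\ `|x - y| <= 2 * h.
Proof.
move=> h0 /forallP yin; split.
  apply: le_trans (coord_le_norm _ i0).
  have /andP[a b] := yin i0; rewrite !mxE ler0_norm; lra.
apply: norm_le_coord; first lra.
move=> i; have /andP[a b] := yin i; rewrite !mxE ler0_norm; lra.
Qed.


Lemma near_lb n (w : 'rV[R]_n -> R) (al sg r th c r0 : R) : (3 <= n)%N ->
  al < n%:R -> 0 <= sg -> 0 < r -> 0 <= th -> 0 < c ->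
  (forall y, r0 < enorm y -> c * powR (enorm y) (- th) <= w y) ->
  exists K R0, 0 < K /\ forall x, R0 < enorm x ->
    ((K * powR (enorm x) (al - r * th - sg))%:E <=
      lebint (fun y => (kern al sg r w x y)%:E))%E.
Proof.
move=> n3 aln sg0 r0' th0 c0 wlb.
have n0 : (0 < n)%N by apply: leq_trans n3.
pose i0 : 'I_n := Ordinal n0.
pose nr : R := n%:R.
have nr3 : 3 <= nr by rewrite /nr (ler_nat R 3 n).
pose a := nr - al.
have a0 : 0 < a by rewrite /a subr_gt0.
pose K := expR (r * ln c - r * th * ln (2 * nr) - sg * ln (2 * nr) - nr * ln (4 * nr)).
exists K, (2 * nr * Num.max r0 1); split; first exact: expR_gt0.
move=> x xR.
set t := enorm x.
have m1 : 1 <= Num.max r0 1 by rewrite le_max lexx orbT.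
have t0 : 0 < t by rewrite (lt_trans _ xR) // !mulr_gt0 //; lra.
pose h := t / (4 * nr).
have h0 : 0 < h by rewrite divr_gt0 //; lra.
pose lo := fun i : 'I_n => x ord0 i + h.
pose hi := fun i : 'I_n => x ord0 i + 2 * h.
have xn1 : t <= nr * `|x| by exact: enorm_le_norm.
have xn2 : `|x| <= t by exact: norm_le_enorm.
pose M := expR (r * (ln c - th * ln (2 * nr * t)) - a * ln t - sg * ln (2 * nr * t)).
have key : forall y, inbox lo hi 0 y -> M <= kern al sg r w x y.
  move=> y yin.
  have [g1 g2] := near_geom i0 h0 yin.
  have d1 : h <= enorm (x - y) by apply: le_trans (norm_le_enorm _).
  have hn : h * nr = t / 4 by rewrite /h; field; lra.
  have d2 : enorm (x - y) <= t.
    apply: le_trans (enorm_le_norm _) _.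
    have : nr * `|x - y| <= nr * (2 * h) by rewrite ler_pM2l //; lra.
    nra.
  have ny1 : `|x| <= `|x - y| + `|y| by rewrite -{1}(subrK y x); exact: ler_normD.
  have ny2 : `|y| <= `|x| + `|x - y|.
    by rewrite -{1}(_ : x - (x - y) = y) ?ler_normB // opprB addrC subrK.
  set s := enorm y.
  have s1 : `|y| <= s by exact: norm_le_enorm.
  have s2 : s <= nr * `|y| by exact: enorm_le_norm.
  have s3 : t / 2 <= nr * `|y| by nra.
  have s4 : s <= 2 * nr * t by nra.
  have sR : Num.max r0 1 < s.
    have : nr * `|y| <= nr * s by rewrite ler_pM2l //; lra.
    move=> ns.
    have : 2 * nr * Num.max r0 1 < 2 * nr * s by apply: lt_le_trans xR _; rewrite -/t; lra.
    by rewrite ltr_pM2l //; lra.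
  have s0 : 0 < s by lra.
  have sr0 : r0 < s by apply: le_lt_trans sR; rewrite le_max lexx.
  have d0 : 0 < enorm (x - y) by lra.
  set d := enorm (x - y).
  have wy := wlb y sr0.
  rewrite (powRE' _ s0) in wy.
  have E1 : 0 < c * expR (- th * ln (2 * nr * t)) by rewrite mulr_gt0 // expR_gt0.
  have wy' : c * expR (- th * ln (2 * nr * t)) <= w y.
    apply: le_trans wy; rewrite ler_pM2l // ler_expR.
    have : ln s <= ln (2 * nr * t) by rewrite ler_ln // posrE; nra.
    nra.
  have wy0 : 0 < w y by lra.
  have lw : ln c - th * ln (2 * nr * t) <= ln (w y).
    have := wy'; rewrite -ler_ln ?posrE // lnM ?posrE ?expR_gt0 // expRK.
    by rewrite mulNr.
  have ld : ln d <= ln t by rewrite ler_ln.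
  have ls : ln s <= ln (2 * nr * t) by rewrite ler_ln // posrE; nra.
  rewrite /kern (powRE' _ wy0) (powRE' _ d0) (powRE' _ s0).
  rewrite -/s -/d.
  rewrite (_ : expR (r * ln (w y)) / _ = expR (r * ln (w y) - (n%:R - al) * ln d - sg * ln s)); last first.
    by rewrite !expRD !expRN invfM mulrA.
  rewrite ler_expR.
  have : 0 <= r * (ln (w y) - (ln c - th * ln (2 * nr * t))) by rewrite mulr_ge0 //; lra.
  have : 0 <= a * (ln t - ln d) by rewrite mulr_ge0 //; lra.
  have : 0 <= sg * (ln (2 * nr * t) - ln s) by rewrite mulr_ge0 //; lra.
  rewrite /a /nr; lra.
have := @lebint_box _ _ (fun y => (kern al sg r w x y)%:E) M lo hi (ltW (expR_gt0 _)).
move=> /(_ _ _ key) => H.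
apply: le_trans (H _ _); last 2 first.
- by move=> i; rewrite /lo /hi; lra.
- by move=> y; rewrite lee_fin kern_ge0.
rewrite lee_fin (eq_bigr (fun=> h)); last by move=> i _; rewrite /hi /lo; ring.
rewrite prodr_const card_ord.
have hn' : h ^+ n = expR (nr * ln h) by rewrite -(powR_mulrn _ (ltW h0)) powRE'.
have lh : ln h = ln t - ln (4 * nr) by rewrite /h ln_div // posrE; lra.
have l2 : ln (2 * nr * t) = ln (2 * nr) + ln t by rewrite lnM // posrE; lra.
rewrite hn' (powRE' _ t0) /K /M -!expRD le_eqVlt; apply/orP; left; apply/eqP; congr expR.
rewrite lh l2 /a /nr; ring.
Qed.


Lemma measurable_inbox n (lo hi : 'I_n -> R) :
  measurable ([set y | inbox lo hi 0 y] : set (@TT R n)).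
Proof.
rewrite (_ : [set y | _] = \bigcap_(i in [set: 'I_n]) [set y : 'rV[R]_n | [set` `[(lo i), (hi i)]] (y ord0 i)]).
  apply: fin_bigcap_measurable; first exact: (@finite_finset (ordinal n) setT).
  move=> i _; exact: (measurable_cyl i (measurable_itv _)).
apply/seteqP; split => y /=.
  by move=> /forallP H i _ /=; rewrite in_itv /=; exact: H.
by move=> H; apply/forallP => i; have := H i I; rewrite /= in_itv.
Qed.

Lemma far_lb n (w : 'rV[R]_n -> R) (al sg r : R) : (3 <= n)%N ->
  al < n%:R -> 0 <= sg -> 0 < r -> (forall y, 0 < w y) -> borel_fun w ->
  exists c R0, 0 < c /\ forall x, R0 < enorm x ->
    ((c * powR (enorm x) (- (n%:R - al)))%:E <=
      lebint (fun y => (kern al sg r w x y)%:E))%E.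
Proof.
move=> n3 aln sg0 r0 wpos bw.
have n0 : (0 < n)%N by apply: leq_trans n3.
pose i0 : 'I_n := Ordinal n0.
pose nr : R := n%:R.
have nr3 : 3 <= nr by rewrite /nr (ler_nat R 3 n).
pose a := nr - al.
have a0 : 0 < a by rewrite /a subr_gt0.
pose b := (2 * nr)^-1.
have b0 : 0 < b by rewrite invr_gt0; lra.
have bn : b * nr = 1 / 2 by rewrite /b; field; lra.
pose lo := fun _ : 'I_n => b.
pose hi := fun _ : 'I_n => 2 * b.
pose G : @TT R n -> \bar R := fun y => (powR (w y) r * (inbox lo hi 0 y)%:R)%:E.
have mw := borel_meas bw.
have mG : measurable_fun setT G.
  apply/measurable_EFinP; apply: measurable_funM.
    exact: (measurableT_comp (measurable_powR r) mw).
  rewrite (_ : (fun y : @TT R n => (inbox lo hi 0 y)%:R) = \1_[set y | inbox lo hi 0 y]).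
    apply: measurable_indic; exact: (@measurable_inbox n lo hi).
  by apply/funext => y; rewrite indicE mem_setE.
have G0 : forall y, (0 <= G y)%E by move=> y; rewrite lee_fin mulr_ge0 // powR_ge0.
have Gpos : (0 < lebint G)%E.
  apply: (@iint_pos _ _ G lo hi mG G0) => //.
  - by move=> i; rewrite /lo /hi; lra.
  - by move=> y yin; rewrite /G yin mulr1 lte_fin powR_gt0.
  - by apply/forallP => i; apply/implyP; rewrite leqNgt ltn_ord.
have [c' [c'0 c'G]] : exists c', 0 < c' /\ (c'%:E <= lebint G)%E.
  move: Gpos; case: (lebint G) => [g| |] //.
  - by move=> g0; exists g; rewrite lee_fin.
  - by move=> _; exists 1; rewrite leey.
exists (c' * powR (2 * nr) (- a)), 2; split.
  by rewrite mulr_gt0 // powR_gt0 //; lra.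
move=> x xR.
set t := enorm x in xR *.
have t0 : 0 < t by lra.
have xn1 : t <= nr * `|x| by exact: enorm_le_norm.
have xn2 : `|x| <= t by exact: norm_le_enorm.
pose k := powR (2 * nr * t) (- a).
have k0 : 0 < k by rewrite powR_gt0 //; nra.
have key : forall y, (k%:E * G y <= (kern al sg r w x y)%:E)%E.
  move=> y; rewrite /G; case yin : (inbox lo hi 0 y); last first.
    by rewrite mulr0 mule0 lee_fin kern_ge0.
  rewrite mulr1 -EFinM lee_fin.
  have /forallP yb := yin.
  have y1 : `|y| <= 2 * b.
    apply: norm_le_coord; first lra.
    by move=> i; have /andP[u v] := yb i; rewrite /lo /hi /= in u v; rewrite ger0_norm; lra.
  have y2 : b <= `|y|.
    by apply: le_trans (coord_le_norm _ i0); have /andP[u v] := yb i0; rewrite /lo /hi /= in u v; rewrite ger0_norm; lra.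
  have ny1 : `|x| <= `|x - y| + `|y| by rewrite -{1}(subrK y x); exact: ler_normD.
  have ny2 : `|x - y| <= `|x| + `|y| by exact: ler_normB.
  have s1 : `|y| <= enorm y by exact: norm_le_enorm.
  have s2 : enorm y <= nr * `|y| by exact: enorm_le_norm.
  have s3 : enorm y <= 1 by nra.
  have s0 : 0 < enorm y by lra.
  have d1 : `|x - y| <= enorm (x - y) by exact: norm_le_enorm.
  have d2 : enorm (x - y) <= nr * `|x - y| by exact: enorm_le_norm.
  have d3 : t - 1 <= nr * `|x - y| by nra.
  have d0 : 0 < enorm (x - y).
    have : 0 < `|x - y| by nra.
    lra.
  have d4 : enorm (x - y) <= 2 * nr * t by nra.
  set s := enorm y in s0 s1 s2 s3 *.
  set d := enorm (x - y) in d0 d1 d2 d3 d4 *.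
  have wy0 := wpos y.
  rewrite /kern /k (powRE' _ wy0) (powRE' _ d0) (powRE' _ s0) powRE'; last by nra.
  rewrite (_ : expR (r * ln (w y)) / _ = expR (r * ln (w y) - (n%:R - al) * ln d - sg * ln s)); last first.
    by rewrite !expRD !expRN invfM mulrA.
  rewrite -expRD ler_expR.
  have ld : ln d <= ln (2 * nr * t) by rewrite ler_ln // posrE; nra.
  have ls : ln s <= 0 by rewrite -ln1 ler_ln // posrE; lra.
  have : 0 <= a * (ln (2 * nr * t) - ln d) by rewrite mulr_ge0 //; lra.
  have : 0 <= sg * (- ln s) by rewrite mulr_ge0 //; lra.
  rewrite /a /nr; lra.
have kG0 : forall y : 'rV[R]_n, (0 <= k%:E * G y)%E.
  by move=> y; rewrite mule_ge0 // lee_fin ltW.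
have H := @le_iint R n n (fun y => (k%:E * G y)%E) (fun y => (kern al sg r w x y)%:E) kG0 key 0.
rewrite /lebint; apply: le_trans H.
rewrite (iint_scale n mG G0 (ltW k0)).
have k0' : (0 <= k%:E)%E by rewrite lee_fin ltW.
apply: le_trans (lee_wpmul2l k0' c'G).
  have E : k = (2 * nr) `^ (- a) * t `^ (- a) by rewrite /k powRM //; lra.
  rewrite -EFinM lee_fin E.
  by rewrite le_eqVlt; apply/orP; left; apply/eqP; rewrite /a /nr; ring.
Qed.


Lemma exists_norm n : (0 < n)%N -> forall t : R, 0 <= t -> exists x : 'rV[R]_n, enorm x = t.
Proof.
move=> n0 t t0; pose i0 : 'I_n := Ordinal n0.
exists (\row_j (if j == i0 then t else 0)).
rewrite /enorm (bigD1 i0) //= big1 ?addr0.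
  by rewrite mxE eqxx sqrtr_sqr ger0_norm.
by move=> j /negbTE ji; rewrite mxE ji expr0n.
Qed.

Lemma exp_cmp (K C e1 e2 R0 : R) : 0 < K -> 0 < C ->
  (forall t, R0 < t -> K * powR t e1 <= C * powR t e2) -> e1 <= e2.
Proof.
move=> K0 C0 H; rewrite leNgt; apply/negP => e21.
pose d := e1 - e2.
have d0 : 0 < d by rewrite /d subr_gt0.
pose L := Num.max R0 ((`|ln C - ln K| + 1) / d).
have L1 : R0 <= L by rewrite le_max lexx.
have L2 : (`|ln C - ln K| + 1) / d <= L by rewrite le_max lexx orbT.
have tR : R0 < expR L by apply: lt_le_trans (expR_ge1Dx L); lra.
have := H _ tR.
rewrite !powRE' ?expR_gt0 // expRK -ler_ln ?posrE ?mulr_gt0 ?expR_gt0 //.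
rewrite !lnM ?posrE ?expR_gt0 // !expRK => h.
have : (`|ln C - ln K| + 1) <= L * d by rewrite -ler_pdivrMr.
have : ln C - ln K <= `|ln C - ln K| by exact: ler_norm.
rewrite /d; nra.
Qed.

End Main.

Local Close Scope classical_set_scope.
Lemma exp_cmp_x (R : realType) n (f : 'rV[R]_n -> R) (K C e1 e2 R1 R2 : R) : (0 < n)%N ->
  0 < K -> 0 < C ->
  (forall x, R1 < enorm x -> K * powR (enorm x) e1 <= f x) ->
  (forall x, R2 < enorm x -> f x <= C * powR (enorm x) e2) -> e1 <= e2.
Proof.
move=> n0 K0 C0 H1 H2.
apply: (@exp_cmp R K C e1 e2 (Num.max (Num.max R1 R2) 0)) => // t tR.
have t0 : 0 <= t by apply: ltW; apply: le_lt_trans tR; rewrite le_max lexx orbT.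
have [x xt] := exists_norm n0 t0.
have r1 : R1 < t by apply: le_lt_trans tR; rewrite !le_max lexx.
have r2 : R2 < t by apply: le_lt_trans tR; rewrite !le_max lexx orbT.
rewrite -xt in r1 r2 *.
exact: le_trans (H1 _ r1) (H2 _ r2).
Qed.

Theorem theorem1p1 (R : realType) (n : nat) (p q alpha s1 s2 : R) :
  (3 <= n)%N -> 0 < p -> 0 < q -> 1 < p * q ->
  0 < alpha -> alpha < n%:R ->
  0 <= s1 -> s1 < alpha -> 0 <= s2 -> s2 < alpha ->
  (forall u v : 'rV[R]_n -> R,
     pos_solution p q alpha s1 s2 u v ->
     bounded_fun u -> bounded_fun v -> decaying u v ->
     exists C r0 : R, 0 < C /\
       forall x, r0 < enorm x ->
         u x <= C * powR (enorm x) (- q0 p q alpha s1 s2) /\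
         v x <= C * powR (enorm x) (- p0 p q alpha s1 s2)) /\
  (p <= q -> s2 <= s1 ->
   forall u v : 'rV[R]_n -> R,
     pos_solution p q alpha s1 s2 u v ->
     exists c r0 : R, 0 < c /\
       forall x, r0 < enorm x ->
         c / powR (enorm x) (n%:R - alpha) <= u x /\
         c / powR (enorm x)
               (Num.min (n%:R - alpha) (p * (n%:R - alpha) - (alpha - s2)))
           <= v x).
Proof.
move=> n3 p0' q0' pq1 al0 aln s10 s1a s20 s2a.
have n0 : (0 < n)%N by apply: leq_trans n3.
split.
  move=> u v [up [vp [bu [bv [eu ev]]]]] _ _.
  move=> [th1 [th2 [th10 [th20 [[c1 [C1 [r1 [c10 [C10 hu]]]]] [c2 [C2 [r2 [c20 [C20 hv]]]]]]]]]].
  have [K1 [R1 [K10 HK1]]] := @near_lb R n v alpha s1 q th2 c2 r2 n3 aln s10 q0' (ltW th20) c20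
    (fun y hy => (hv y hy).1).
  have [K2 [R2 [K20 HK2]]] := @near_lb R n u alpha s2 p th1 c1 r1 n3 aln s20 p0' (ltW th10) c10
    (fun y hy => (hu y hy).1).
  have A : alpha - q * th2 - s1 <= - th1.
    apply: (@exp_cmp_x R n u K1 C1 _ _ R1 r1) => // x hx.
      by have := HK1 x hx; rewrite -eu lee_fin.
    exact: (hu x hx).2.
  have B : alpha - p * th1 - s2 <= - th2.
    apply: (@exp_cmp_x R n v K2 C2 _ _ R2 r2) => // x hx.
      by have := HK2 x hx; rewrite -ev lee_fin.
    exact: (hv x hx).2.
  have pq0 : 0 < p * q - 1 by lra.
  have qB : q * (alpha - p * th1 - s2) <= q * (- th2) by rewrite ler_pM2l.
  have pA : p * (alpha - q * th2 - s1) <= p * (- th1) by rewrite ler_pM2l.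
  have T1 : q0 p q alpha s1 s2 <= th1.
    by rewrite /q0 ler_pdivrMr //; lra.
  have T2 : p0 p q alpha s1 s2 <= th2.
    by rewrite /p0 ler_pdivrMr //; lra.
  exists (Num.max C1 C2), (Num.max (Num.max r1 r2) 1); split.
    by rewrite lt_max C10.
  move=> x hx.
  have x1 : 1 <= enorm x by apply: ltW; apply: le_lt_trans hx; rewrite le_max lexx orbT.
  have hr1 : r1 < enorm x by apply: le_lt_trans hx; rewrite !le_max lexx.
  have hr2 : r2 < enorm x by apply: le_lt_trans hx; rewrite !le_max lexx orbT.
  split.
    apply: le_trans (hu x hr1).2 _.
    apply: ler_pM; [exact: ltW|exact: powR_ge0|by rewrite le_max lexx|].
    by apply: ler_powR => //; lra.
  apply: le_trans (hv x hr2).2 _.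
  apply: ler_pM; [exact: ltW|exact: powR_ge0|by rewrite le_max lexx orbT|].
  by apply: ler_powR => //; lra.
move=> _ _ u v [up [vp [bu [bv [eu ev]]]]].
have [cu [Ru [cu0 Hu]]] := @far_lb R n v alpha s1 q n3 aln s10 q0' vp bv.
have [cv [Rv [cv0 Hv]]] := @far_lb R n u alpha s2 p n3 aln s20 p0' up bu.
have Hu' : forall y, Ru < enorm y -> cu * powR (enorm y) (- (n%:R - alpha)) <= u y.
  by move=> y hy; have := Hu y hy; rewrite -eu lee_fin.
have Hv' : forall y, Rv < enorm y -> cv * powR (enorm y) (- (n%:R - alpha)) <= v y.
  by move=> y hy; have := Hv y hy; rewrite -ev lee_fin.
have a0 : 0 <= n%:R - alpha by lra.
have [K [Rn [K0 HK]]] := @near_lb R n u alpha s2 p (n%:R - alpha) cu Ru n3 aln s20 p0' a0 cu0 Hu'.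
exists (Num.min cu (Num.min cv K)), (Num.max Ru (Num.max Rv Rn)); split.
  by rewrite !lt_min cu0 cv0 K0.
move=> x hx.
have hu : Ru < enorm x by apply: le_lt_trans hx; rewrite !le_max lexx.
have hv : Rv < enorm x by apply: le_lt_trans hx; rewrite !le_max lexx orbT.
have hn : Rn < enorm x by apply: le_lt_trans hx; rewrite !le_max lexx !orbT.
have cpos : 0 <= Num.min cu (Num.min cv K) by rewrite !le_min !ltW.
split.
  apply: le_trans (Hu' x hu); rewrite powRN.
  by apply: ler_wpM2r; [rewrite invr_ge0 powR_ge0|rewrite ge_min lexx].
have [ab|ba] := leP (n%:R - alpha) (p * (n%:R - alpha) - (alpha - s2)).
  apply: le_trans (Hv' x hv); rewrite powRN.
  by apply: ler_wpM2r; [rewrite invr_ge0 powR_ge0|rewrite !ge_min lexx orbT].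
have := HK x hn; rewrite -ev lee_fin => H.
apply: le_trans H; rewrite -powRN.
rewrite (_ : - (p * (n%:R - alpha) - (alpha - s2)) = alpha - p * (n%:R - alpha) - s2); last by ring.
by apply: ler_wpM2r; [rewrite powR_ge0|rewrite !ge_min lexx !orbT].
Qed.
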